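(* Let $0<\varepsilon<1$, let $d \geq 14/\varepsilon$, and let $S \subseteq I_3^d$ be an $\varepsilon$-sparse set with $|S| \leq 2^{\varepsilon d/4}$. Then there exists a $d$-dimensional polystochastic matrix $A$ of order $3$ such that $\mathrm{supp}(A) = I_3^d \setminus S$.
   Context: $I_3^d = \{1,2,3\}^d$. A $d$-dimensional matrix of order $3$ is an array $A = (a_\alpha)_{\alpha \in I_3^d}$ of reals; a line is the set of entries obtained by fixing all but one coordinate of the index; $A$ is polystochastic if all entries are nonnegative and each line sums to $1$. $\mathrm{supp}(A) = \{\alpha : a_\alpha \neq 0\}$. For $\alpha,\beta \in I_3^d$, $\rho(\alpha,\beta)$ is the Hamming distance. For $\alpha \in I_3^d$ let $T_\alpha = \{\beta \in I_3^d : \rho(\alpha,\beta) = d\}$. For $0<\varepsilon<1$, a set $S \subseteq I_3^d$ is $\varepsilon$-sparse if (1) $\rho(\alpha,\beta) \geq \varepsilon d$ for all distinct $\alpha,\beta \in S$, and (2) for every $\alpha \in S$ there is $\gamma_\alpha \in I_3^d$ with $T_{\gamma_\alpha} \cap S = \{\alpha\}$. *)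

(* Defs.v *)
From mathcomp Require Import all_boot all_order all_algebra.
From mathcomp Require Import all_classical all_reals all_analysis.
Set Implicit Arguments. Unset Strict Implicit. Unset Printing Implicit Defensive.
Import Order.TTheory GRing.Theory Num.Theory.
Local Open Scope ring_scope.

(* Indices: I_3^d, coordinates 0..2 stand for 1..3. *)
Definition idx (d : nat) := {ffun 'I_d -> 'I_3}.

Definition mat (R : realType) (d : nat) := idx d -> R.

Definition hamming (d : nat) (a b : idx d) : nat := #|[set i | a i != b i]|.

Definition setc (d : nat) (a : idx d) (i : 'I_d) (x : 'I_3) : idx d :=
  [ffun j => if j == i then x else a j].

Definition polystochastic (R : realType) (d : nat) (A : mat R d) : Prop :=
  (forall a, 0 <= A a) /\
  (forall (a : idx d) (i : 'I_d), \sum_(x < 3) A (setc a i x) = 1).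

Definition supp (R : realType) (d : nat) (A : mat R d) : {set idx d} :=
  [set a | A a != 0].

Definition Tset (d : nat) (a : idx d) : {set idx d} :=
  [set b | hamming a b == d].

Definition eps_sparse (R : realType) (eps : R) (d : nat) (S : {set idx d}) : Prop :=
  (forall a b, a \in S -> b \in S -> a != b -> eps * d%:R <= (hamming a b)%:R) /\
  (forall a, a \in S -> exists g : idx d, Tset g :&: S = [set a]).

(* Main.v *)
Require Import Defs.
From mathcomp Require Import all_boot all_order all_algebra.
From mathcomp Require Import all_classical all_reals all_analysis.
From mathcomp Require Import ring lra.
Import Order.TTheory GRing.Theory Num.Theory.
Local Open Scope ring_scope.
Lemma Qpow (R: realType) (r : R) m k : r/4 * m%:R <= k%:R -> (2 `^ (r/4)) ^+ m <= 2 ^+ k.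
Proof.
move=> H; rewrite -powR_mulrn ?powR_ge0 // -powRrM -(powR_mulrn k) //.
by apply: ler_powR => //; rewrite ler1n.
Qed.
Definition g1 (R : realType) (a x : 'I_3) : R := if x == a then 1 else - 2^-1.
Definition h1 (R : realType) (a c x : 'I_3) : R := if x == a then 1 else if x == c then 0 else -1.

Lemma ham_sym d (a b : idx d) : hamming a b = hamming b a.
Proof. by rewrite /hamming; apply: eq_card => i; rewrite !inE eq_sym. Qed.

Lemma ham_tri d (a b c : idx d) : (hamming a c <= hamming a b + hamming b c)%N.
Proof.
rewrite /hamming; apply: leq_trans (leq_card_setU _ _).
apply: subset_leq_card; apply/fintype.subsetP => i; rewrite !inE.
by case: (eqVneq (a i) (b i)) => [->|] //= ->.
Qed.

Lemma ham0 d (a b : idx d) : a != b -> (0 < hamming a b)%N.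
Proof.
move=> ab; rewrite /hamming card_gt0; apply/set0Pn.
case: (pickP [pred i | a i != b i]) => [i Hi|H]; first by exists i; rewrite inE.
by case/eqP: ab; apply/ffunP => i; have := H i => /= /negbFE/eqP.
Qed.

Lemma hamd d (g a : idx d) : hamming g a = d -> forall i, g i != a i.
Proof.
move=> H i; have : [set i | g i != a i] = [set: 'I_d].
  apply/eqP; rewrite eqEcard finset.subsetT cardsT card_ord /=; by move: H; rewrite /hamming => ->.
by move=> E; have := finset.in_setT i; rewrite -E inE.
Qed.

Lemma hamd' d (g a : idx d) : (forall i, g i != a i) -> hamming g a = d.
Proof.
move=> H; rewrite /hamming -[X in _ = X]card_ord -cardsT; apply: eq_card => i.
by rewrite !inE H.
Qed.

Lemma normP (R : realType) d (a b : idx d) :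
  `|\prod_i g1 R (a i) (b i)| = (2^+(hamming a b))^-1.
Proof.
rewrite normr_prod.
rewrite (eq_bigr (fun i => if i \in [set i | a i != b i] then 2^-1 else 1)); last first.
  move=> i _; rewrite inE /g1 eq_sym; case: ifP => _ /=; first by rewrite normr1.
  by rewrite normrN ger0_norm // invr_ge0.
by rewrite -big_mkcond /= prodr_const exprVn.
Qed.

Lemma normC (R : realType) d (a c b : idx d) :
  `|\prod_i h1 R (a i) (c i) (b i)| <= 1.
Proof.
rewrite normr_prod; apply: prodr_ile1 => i _; rewrite normr_ge0 /=.
rewrite /h1; case: ifP => _; first by rewrite normr1.
by case: ifP => _; rewrite ?normr0 ?normrN ?normr1.
Qed.
Lemma g1sum (R : realType) a : \sum_(x < 3) g1 R a x = 0.
Proof.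
rewrite !big_ord_recr big_ord0 /= add0r /g1.
case: a => [[|[|[|]]] Ha] //=; rewrite /eq_op /=; lra.
Qed.

Lemma h1sum (R : realType) a c : a != c -> \sum_(x < 3) h1 R a c x = 0.
Proof.
rewrite !big_ord_recr big_ord0 /= add0r /h1.
case: a => [[|[|[|]]] Ha] //=; case: c => [[|[|[|]]] Hc] //=; rewrite /eq_op /=; lra.
Qed.

Lemma zls_prod (R : realType) d (f : 'I_d -> 'I_3 -> R) (a : idx d) i :
  \sum_(x < 3) f i x = 0 -> \sum_(x < 3) \prod_j f j (setc a i x j) = 0.
Proof.
move=> H.
under eq_bigr => x _ do rewrite (bigD1 i) //= ffunE eqxx.
under eq_bigr => x _ do under eq_bigr => j /negPf Hj do rewrite ffunE Hj.
by rewrite -big_distrl /= H mul0r.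
Qed.

Lemma Vbound (R : realType) (r : R) m k : r/4 * m%:R <= k%:R ->
  (2^+k)^-1 <= ((2 `^ (r/4))^-1)^+m.
Proof.
move=> H; rewrite exprVn lef_pV2 ?posrE ?exprn_gt0 ?powR_gt0 //; exact: Qpow.
Qed.

Lemma half_bound (R : realType) k : (0 < k)%N -> (2^+k)^-1 <= (2 : R)^-1.
Proof.
case: k => // k _; rewrite lef_pV2 ?posrE ?exprn_gt0 //.
rewrite exprS; have := exprn_ege1 k (_ : 1 <= (2:R)); rewrite ler1n => /(_ isT) h.
nra.
Qed.

Lemma sum_le_card (R : realType) (T : finType) (S : {set T}) (P : pred T) (f : T -> R) c :
  0 <= c -> (forall x, x \in S -> P x -> f x <= c) ->
  \sum_(x in S | P x) f x <= #|S|%:R * c.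
Proof.
move=> c0 H; rewrite big_mkcondr /=.
apply: le_trans (_ : \sum_(x in S) c <= _); last by rewrite sumr_const mulr_natl.
apply: ler_sum => x xS; case: ifP => Px; [exact: H|exact: c0].
Qed.

Theorem lemma1 (R : realType) (eps : R) (d : nat) (S : {set idx d}) :
  0 < eps -> eps < 1 ->
  14 / eps <= d%:R ->
  eps_sparse eps S ->
  (#|S|%:R <= (2 : R) `^ (eps * d%:R / 4)) ->
  exists A : mat R d, polystochastic A /\ supp A = ~: S.
Proof.
move=> e0 e1 hd [Hsp Hg] HN.
set r := eps * d%:R in Hsp HN.
have r14 : 14 <= r by rewrite /r mulrC -ler_pdivrMr.
set Q := 2 `^ (r / 4) in HN.
have Q8 : 8 <= Q.
  have -> : (8 : R) = 2 `^ (3%:R) by rewrite powR_mulrn // !exprS expr0; lra.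
  apply: ler_powR; [by rewrite ler1n | lra].
set u := Q^-1.
have u0 : 0 < u by rewrite invr_gt0; lra.
have uQ : u * Q = 1 by rewrite mulVf //; apply/eqP => h; lra.
have u8 : u <= 8^-1.
  by rewrite /u lef_pV2 // posrE; lra.
set N : R := #|S|%:R in HN.
have N0 : 0 <= N by rewrite /N ler0n.
have Nu : N * u <= 1 by nra.
pose gam a := odflt a [pick g | Tset g :&: S == [set a]].
have Hgam : forall a, a \in S -> Tset (gam a) :&: S = [set a].
  move=> a aS; rewrite /gam; case: pickP => [g /eqP E|H] /=; first exact: E.
  by case: (Hg a aS) => g Eg; have := H g; rewrite Eg eqxx.
have Tgam : forall a, a \in S -> forall i, gam a i != a i.
  move=> a aS; apply: hamd; have : a \in Tset (gam a) :&: S by rewrite Hgam // set11.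
  by rewrite !inE => /andP [/eqP].
pose P (a b : idx d) := \prod_i g1 R (a i) (b i).
pose C (a b : idx d) := \prod_i h1 R (a i) (gam a i) (b i).
pose Qf a b := P a b - \sum_(a' in S | a' != a) P a a' * C a' b.
pose A (b : idx d) := 3^-1 * (1 - \sum_(a in S) Qf a b).
have Paa : forall a, P a a = 1 by move=> a; apply: big1 => i _; rewrite /g1 eqxx.
have Cval : forall a a', a \in S -> a' \in S -> C a a' = if a' == a then 1 else 0.
  move=> a a' aS a'S; case: eqVneq => [->|ne].
    by apply: big1 => i _; rewrite /h1 eqxx.
  have nT : a' \notin Tset (gam a).
    apply/negP => aT; have : a' \in Tset (gam a) :&: S by rewrite inE aT.
    by rewrite Hgam // inE (negPf ne).
  case: (pickP [pred i | gam a i == a' i]) => [i /= /eqP Hi|H]; last first.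
    by move: nT; rewrite inE hamd' ?eqxx // => i; have := H i => /= ->.
  rewrite /C (bigD1 i) //= /h1 -Hi eqxx.
  have -> : (gam a i == a i) = false by apply/negbTE; exact: Tgam.
  by rewrite mul0r.
have Qval : forall a a'', a \in S -> a'' \in S -> Qf a a'' = if a'' == a then 1 else 0.
  move=> a a'' aS a''S.
  rewrite /Qf (eq_bigr (fun a' => if a' == a'' then P a a' else 0)); last first.
    by move=> a' /andP [a'S _]; rewrite Cval // eq_sym; case: ifP; rewrite ?mulr1 ?mulr0.
  case: eqVneq => [->|ne].
    rewrite big1 ?Paa ?subr0 // => a' /andP [_ ne]; by rewrite (negPf ne).
  rewrite (bigD1 a'') /=; last by rewrite a''S ne.
  rewrite eqxx big1 ?addr0 ?subrr // => a' /andP [_ ne']; by rewrite (negPf ne').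
have AS : forall b, b \in S -> A b = 0.
  move=> b bS; rewrite /A (bigD1 b) //= Qval // eqxx big1 ?addr0 ?subrr ?mulr0 //.
  by move=> a /andP [aS ne]; rewrite Qval // eq_sym (negPf ne).
have Qline : forall a b i, \sum_(x < 3) Qf a (setc b i x) = 0.
  move=> a b i; rewrite /Qf sumrB /P (@zls_prod R d (fun j => g1 R (a j))) ?g1sum // sub0r.
  rewrite exchange_big /= big1 ?oppr0 // => a' /andP [a'S _].
  by rewrite -mulr_sumr /C (@zls_prod R d (fun j => h1 R (a' j) (gam a' j))) ?mulr0 // h1sum // eq_sym Tgam.
have Qbound : forall a b, a \in S -> `|Qf a b| <= (2^+hamming a b)^-1 + N * (u ^+ 4).
  move=> a b aS; apply: le_trans (ler_normB _ _) _; rewrite normP lerD2l.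
  apply: le_trans (ler_norm_sum _ _ _) _; apply: sum_le_card; first by rewrite exprn_ge0 // ltW.
  move=> a' a'S ne; rewrite normrM normP.
  apply: le_trans (_ : (2 ^+ hamming a a')^-1 * 1 <= _).
    by rewrite ler_pM2l ?invr_gt0 ?exprn_gt0 //; exact: normC.
  rewrite mulr1; apply: Vbound.
  have := Hsp a a' aS a'S (_ : a != a'); rewrite eq_sym => /(_ ne).
  by have -> : r / 4 * 4%:R = r by field.
have Fbound : forall b, b \notin S ->
    \sum_(a in S) (2^+hamming a b)^-1 <= 2^-1 + N * u^+2.
  move=> b bS.
  case: (boolP [exists a in S, (hamming a b)%:R < r/2]) => [/existsP [a0 /andP [a0S H0]] | /existsPn Hn].
    rewrite (bigD1 a0) //=; apply: lerD.
      apply: half_bound; apply: ham0; apply/eqP => E; move: bS; by rewrite -E a0S.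
    apply: sum_le_card; first by rewrite exprn_ge0 // ltW.
    move=> a aS ne; apply: Vbound.
    have h1 := Hsp a a0 aS a0S ne.
    have h2 : (hamming a a0)%:R <= (hamming a b)%:R + (hamming a0 b)%:R :> R.
      by rewrite -natrD ler_nat (@ham_sym d a0 b); exact: ham_tri.
    lra.
  apply: le_trans (_ : N * u^+2 <= _); last by rewrite -[X in X <= _]add0r lerD2r invr_ge0.
  apply: le_trans (_ : \sum_(a in S) u^+2 <= _); last by rewrite sumr_const mulr_natl.
  apply: ler_sum => a aS; apply: Vbound.
  by have := Hn a; rewrite aS /= -leNgt; lra.
have Apos : forall b, b \notin S -> 0 < A b.
  move=> b bS; rewrite /A pmulr_rgt0 ?invr_gt0 // subr_gt0.
  apply: le_lt_trans (ler_norm _) _.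
  apply: le_lt_trans (ler_norm_sum _ _ _) _.
  apply: le_lt_trans (_ : \sum_(a in S) ((2^+hamming a b)^-1 + N * u^+4) < 1).
    by apply: ler_sum => a aS; exact: Qbound.
  rewrite big_split /= sumr_const -mulr_natl -/N.
  have := Fbound b bS.
  rewrite !exprS expr0 !mulr1 => hF.
  have h3 : N * (u * u) <= u by nra.
  have h5 : (N * u) * (N * u) <= 1 by nra.
  have uu : 0 <= u * u by nra.
  have h4 : N * (N * (u * (u * (u * u)))) <= u * u.
    have -> : N * (N * (u * (u * (u * u)))) = ((N * u) * (N * u)) * (u * u) by ring.
    by rewrite ler_piMl.
  nra.
exists A; split; [split|].
- move=> b; case: (boolP (b \in S)) => bS; first by rewrite AS.
  exact/ltW/Apos.
- move=> b i; rewrite /A -mulr_sumr sumrB sumr_const card_ord exchange_big /= big1 ?subr0.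
    by rewrite mulVf // pnatr_eq0.
  by move=> a _; exact: Qline.
- apply/finset.setP => b; rewrite /supp !inE; case: (boolP (b \in S)) => bS /=.
    by move: (AS b bS) => /eqP ->.
  by rewrite gt_eqF // Apos.
Qed.
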